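(* Let $U\in\mathsf{U}(\mathcal{H}_A\otimes\mathcal{H}_B)$ and let $U=\sum_{i=1}^mc_iV_i\otimes W_i$ with $c_i>0$, $V_i\in\mathsf{U}(\mathcal{H}_A)$, $W_i\in\mathsf{U}(\mathcal{H}_B)$; set $\phi:=2\|c\|_1^2-\|c\|_2^2$. Let $E$ be an additional system, $X\in\mathsf{L}(\mathcal{H}_{ABE})$ a Hermitian observable, and $\rho\in\mathsf{D}(\mathcal{H}_{ABE})$. Run the random double Hadamard test circuit described in the context on $\rho$, and let $\boldsymbol{y}\in\mathrm{spec}(X)$ be the outcome of measuring $X$ on $ABE$ and $\boldsymbol{b}=\boldsymbol{b}_1\boldsymbol{b}_2\in\{0,1\}^2$ the outcome of measuring $R_AR_B$ in the computational basis. Then $\hat{\boldsymbol{\mu}}:=\phi\,(-1)^{\boldsymbol{g}+\boldsymbol{b}_1+\boldsymbol{b}_2}\boldsymbol{y}$ is an unbiased estimator of $\mu:=\mathrm{Tr}(XU_{AB}\rho_{ABE}U_{AB}^\dagger)$.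
   Context: Random setting: sample $(\boldsymbol{i},\boldsymbol{j},\boldsymbol{g})\in[m]^2\times\{0,1\}$ with probability $p(i,j,g)=0$ if $i=j$ and $g=1$, and $p(i,j,g)=c_ic_j/\phi$ otherwise. Given $(i,j,g)$, the circuit uses ancilla qubits $R_A,R_B$ initialized in $|0\rangle$: apply a Hadamard gate to each of $R_A,R_B$; if $g=1$ apply the phase gate $S=\mathrm{diag}(1,\mathrm{i})$ to each of $R_A,R_B$ (nothing if $g=0$); apply $|0\rangle\langle0|_{R_A}\otimes V_i+|1\rangle\langle1|_{R_A}\otimes V_j$ on $R_AA$ and $|0\rangle\langle0|_{R_B}\otimes W_i+|1\rangle\langle1|_{R_B}\otimes W_j$ on $R_BB$; apply a Hadamard gate to each of $R_A,R_B$; then measure $R_A,R_B$ in the computational basis and $ABE$ with respect to $X$ (identity acts on $E$ throughout). *)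

(* Defs.v *)
From HB Require Import structures.
From mathcomp Require Import all_boot all_order all_algebra all_field.
From mathcomp.real_closed Require Export mxtens.
Set Implicit Arguments. Unset Strict Implicit. Unset Printing Implicit Defensive.
Import Order.TTheory GRing.Theory Num.Theory.
Local Open Scope ring_scope.

Definition adjmx {m n} (A : 'M[algC]_(m, n)) : 'M[algC]_(n, m) :=
  map_mx (fun z => z^*) A^T.

Definition herm_mx {n} (A : 'M[algC]_n) : Prop := adjmx A = A.

Definition densitymx {n} (rho : 'M[algC]_n) : Prop :=
  (forall v : 'cV[algC]_n, 0 <= (adjmx v *m rho *m v) 0 0) /\ \tr rho = 1.

Definition projectormx {n} (P : 'M[algC]_n) : Prop :=
  herm_mx P /\ P *m P = P.

Definition spectral_decomp {n K} (X : 'M[algC]_n) (y : 'I_K -> algC)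
    (P : 'I_K -> 'M[algC]_n) : Prop :=
  [/\ (forall k, y k \is Num.real) /\ injective y,
      (forall k, projectormx (P k)),
      (forall k l, k != l -> P k *m P l = 0),
      \sum_k P k = 1%:M
    & X = \sum_k y k *: P k].

Definition ket_proj (a : bool) : 'M[algC]_2 := delta_mx (inord a) (inord a).
Definition hadamard : 'M[algC]_2 :=
  (sqrtC 2)^-1 *: \matrix_(i < 2, j < 2) ((-1) ^+ (i * j)).
Definition phase_gate : 'M[algC]_2 :=
  diag_mx (\row_(i < 2) (if i == 0 :> nat then 1 else 'i)).

Definition samp_prob {m} (c : 'I_m -> algC) (phi : algC) (i j : 'I_m) (g : bool)
  : algC := if (i == j) && g then 0 else c i * c j / phi.

(* The circuit on R_A R_B A B E, ordered as ((R_A (x) R_B) (x) ((A (x) B) (x) E)). *)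
Section Circuit.
Variables (dA dB dE : nat).
Local Notation N := (dA * dB * dE)%N.

Definition ctrlA (Vi Vj : 'M[algC]_dA) : 'M[algC]_(2 * 2 * N) :=
  \sum_(a : bool) (ket_proj a *t 1%:M) *t
     (((if a then Vj else Vi) *t (1%:M : 'M_dB)) *t (1%:M : 'M_dE)).

Definition ctrlB (Wi Wj : 'M[algC]_dB) : 'M[algC]_(2 * 2 * N) :=
  \sum_(b : bool) ((1%:M : 'M_2) *t ket_proj b) *t
     (((1%:M : 'M_dA) *t (if b then Wj else Wi)) *t (1%:M : 'M_dE)).

Definition had2 : 'M[algC]_(2 * 2 * N) := (hadamard *t hadamard) *t 1%:M.

Definition phase2 (g : bool) : 'M[algC]_(2 * 2 * N) :=
  if g then (phase_gate *t phase_gate) *t 1%:M else 1%:M.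

Definition circuit (Vi Vj : 'M[algC]_dA) (Wi Wj : 'M[algC]_dB) (g : bool) :=
  had2 *m ctrlB Wi Wj *m ctrlA Vi Vj *m phase2 g *m had2.

Definition circuit_out Vi Vj Wi Wj g (rho : 'M[algC]_N) : 'M[algC]_(2 * 2 * N) :=
  let C := circuit Vi Vj Wi Wj g in
  C *m ((ket_proj false *t ket_proj false) *t rho) *m adjmx C.

Definition outcome_prob Vi Vj Wi Wj g rho (b1 b2 : bool) (Pk : 'M[algC]_N) : algC :=
  \tr (((ket_proj b1 *t ket_proj b2) *t Pk) *m circuit_out Vi Vj Wi Wj g rho).
End Circuit.

(* Main.v *)
Require Import Defs.
From HB Require Import structures.
From mathcomp Require Import all_boot all_order all_algebra all_field.
From mathcomp.real_closed Require Import mxtens.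
From mathcomp Require Import ring.
Import Order.TTheory GRing.Theory Num.Theory.
Local Open Scope ring_scope.

Lemma tensmx_suml m n p q I (r : seq I) (P : pred I) (F : I -> 'M[algC]_(m, n))
  (B : 'M[algC]_(p, q)) :
  (\sum_(i <- r | P i) F i) *t B = \sum_(i <- r | P i) (F i *t B).
Proof.
apply/matrixP => x y; rewrite summxE mxE summxE big_distrl.
by apply: eq_bigr => i _; rewrite mxE.
Qed.

Lemma tensmx_sumr m n p q I (r : seq I) (P : pred I) (F : I -> 'M[algC]_(p, q))
  (A : 'M[algC]_(m, n)) :
  A *t (\sum_(i <- r | P i) F i) = \sum_(i <- r | P i) (A *t F i).
Proof.
apply/matrixP => x y; rewrite summxE mxE summxE big_distrr.
by apply: eq_bigr => i _; rewrite mxE.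
Qed.

Lemma tensmxZl m n p q a (A : 'M[algC]_(m, n)) (B : 'M[algC]_(p, q)) :
  (a *: A) *t B = a *: (A *t B).
Proof. by apply/matrixP => x y; rewrite !mxE mulrA. Qed.

Lemma tensmxZr m n p q a (A : 'M[algC]_(m, n)) (B : 'M[algC]_(p, q)) :
  A *t (a *: B) = a *: (A *t B).
Proof. by apply/matrixP => x y; rewrite !mxE mulrCA. Qed.

Lemma tensmx11 m n : (1%:M : 'M[algC]_m) *t (1%:M : 'M[algC]_n) = 1%:M.
Proof.
apply/matrixP => i j.
case: (mxtens_indexP i) => i1 i2; case: (mxtens_indexP j) => j1 j2.
rewrite tensmxE !mxE -natrM mulnb (inj_eq (can_inj (@mxtens_indexK _ _))).
by rewrite xpair_eqE.
Qed.

Lemma mxtrace_tens m n (A : 'M[algC]_m) (B : 'M[algC]_n) :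
  \tr (A *t B) = \tr A * \tr B.
Proof.
rewrite /mxtrace (reindex (@mxtens_index m n)) /=; last first.
  by exists (@mxtens_unindex m n) => x _; [exact: mxtens_indexK | exact: mxtens_unindexK].
rewrite big_distrlr /= pair_bigA /=; apply: eq_bigr => [[i j]] _.
by rewrite tensmxE.
Qed.

Lemma mxtrace_sum n I (r : seq I) (P : pred I) (F : I -> 'M[(algC : pzRingType)]_n) :
  \tr (\sum_(i <- r | P i) F i) = \sum_(i <- r | P i) \tr (F i).
Proof. exact: raddf_sum. Qed.

Lemma adjmx_tens m n p q (A : 'M[algC]_(m, n)) (B : 'M[algC]_(p, q)) :
  adjmx (A *t B) = adjmx A *t adjmx B.
Proof. by apply/matrixP => x y; rewrite !mxE rmorphM. Qed.

Lemma adjmx_mul m n p (A : 'M[algC]_(m, n)) (B : 'M[algC]_(n, p)) :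
  adjmx (A *m B) = adjmx B *m adjmx A.
Proof.
apply/matrixP => x y; rewrite !mxE rmorph_sum; apply: eq_bigr => k _.
by rewrite !mxE rmorphM mulrC.
Qed.

Lemma adjmx_sum m n I (r : seq I) (P : pred I) (F : I -> 'M[(algC : pzRingType)]_(m, n)) :
  adjmx (\sum_(i <- r | P i) F i) = \sum_(i <- r | P i) adjmx (F i).
Proof.
apply/matrixP => x y; rewrite !mxE summxE rmorph_sum summxE.
by apply: eq_bigr => i _; rewrite !mxE.
Qed.

Lemma adjmxZ m n a (A : 'M[algC]_(m, n)) : adjmx (a *: A) = a^* *: adjmx A.
Proof. by apply/matrixP => x y; rewrite !mxE rmorphM. Qed.

Lemma mul_delta_l n p (i j : 'I_n) (A : 'M[algC]_(n, p)) r s :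
  (delta_mx i j *m A) r s = (r == i)%:R * A j s.
Proof.
rewrite mxE (bigD1 j) //= big1 => [|k kj]; rewrite !mxE ?eqxx ?(negbTE kj) ?andbF ?mul0r ?addr0 ?andbT //.
Qed.

Lemma mul_delta_r m n (i j : 'I_n) (A : 'M[algC]_(m, n)) r s :
  (A *m delta_mx i j) r s = A r i * (s == j)%:R.
Proof.
rewrite mxE (bigD1 i) //= big1 => [|k ki]; rewrite !mxE ?eqxx ?(negbTE ki) ?andbF ?mulr0 ?addr0 //=.
Qed.

Lemma mul_delta_mid m n p (k : 'I_n) (A : 'M[algC]_(m, n)) (B : 'M[algC]_(n, p)) r s :
  (A *m delta_mx k k *m B) r s = A r k * B k s.
Proof.
rewrite mxE (bigD1 k) //= big1 => [|t tk]; rewrite ?mul_delta_r ?eqxx ?(negbTE tk) ?mulr0 ?mul0r ?addr0 ?mulr1 //.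
Qed.

Lemma tr_delta2 n (p r : 'I_n) (A B : 'M[algC]_n) :
  \tr (delta_mx p p *m A *m delta_mx r r *m B) = A p r * B r p.
Proof.
rewrite /mxtrace (bigD1 p) //= big1 => [|t tp].
  by rewrite mul_delta_mid mul_delta_l eqxx mul1r addr0.
by rewrite mul_delta_mid mul_delta_l (negbTE tp) mul0r mul0r.
Qed.
Definition sg (g : bool) : 'M[algC]_2 := if g then phase_gate else 1%:M.
Definition mm (g a : bool) : 'M[algC]_2 := hadamard *m ket_proj a *m sg g *m hadamard.
Definition alpha (g a : bool) : algC := if g && a then 'i else 1.
Definition qq (g b a a' : bool) : algC :=
  \tr (ket_proj b *m mm g a *m ket_proj false *m adjmx (mm g a')).
Definition hh : algC := (sqrtC 2)^-1.
Definition omega (g a : bool) : algC := if g then (if a then 'i else - 'i) else 1.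
Definition ff (g a a' : bool) : algC :=
  if a == a' then 0 else omega g a * (2 * hh ^+ 4).

Lemma ket_sg g a : ket_proj a *m sg g = alpha g a *: ket_proj a.
Proof.
case: g; last by rewrite /sg mulmx1 scale1r.
rewrite /sg /phase_gate mul_mx_diag; apply/matrixP => r s; rewrite !mxE.
case: (s =P inord a) => [->|_]; last by rewrite andbF mul0r mulr0.
rewrite inordK; last by case: a.
by case: a => /=; rewrite mulrC.
Qed.

Lemma scale_entry m n a (A : 'M[algC]_(m, n)) i j : (a *: A) i j = a * A i j.
Proof. by rewrite mxE. Qed.

Lemma adj_entry m n (A : 'M[algC]_(m, n)) i j : adjmx A i j = (A j i)^*.
Proof. by rewrite !mxE. Qed.

Lemma conjM (x y : algC) : (x * y)^* = x^* * y^*.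
Proof. exact: rmorphM. Qed.
Lemma conj1 : (1 : algC)^* = 1.
Proof. exact: rmorph1. Qed.
Lemma conjN1 : (-1 : algC)^* = -1.
Proof. exact: rmorphN1. Qed.

Lemma hE (a b : bool) : hadamard (inord a) (inord b) = hh * (if a && b then -1 else 1).
Proof.
have ha : (a < 2)%N by case: a.
have hb : (b < 2)%N by case: b.
rewrite /hadamard !mxE !inordK //.
by move: ha hb; case: a; case: b; rewrite /= ?expr0 ?expr1.
Qed.

Lemma mmE (g a b : bool) : mm g a (inord b) (inord false) =
  alpha g a * (hh * hh) * (if a && b then -1 else 1).
Proof.
rewrite /mm -(mulmxA hadamard) ket_sg -(scalemxAr (alpha g a) hadamard).
rewrite -(scalemxAl (alpha g a) (hadamard *m ket_proj a) hadamard) scale_entry /ket_proj.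
rewrite mul_delta_mid hE hE.
by case: a; case: b => /=; ring.
Qed.

Lemma hh_conj : hh^* = hh.
Proof. by apply: geC0_conj; rewrite /hh invr_ge0 sqrtC_ge0. Qed.

Lemma qqE g b a a' : qq g b a a' =
  alpha g a * (alpha g a')^* * (hh * hh * (hh * hh)) *
  ((if a && b then -1 else 1) * (if a' && b then -1 else 1)).
Proof.
rewrite /qq /ket_proj tr_delta2 adj_entry mmE mmE !conjM hh_conj.
case: (a' && b); rewrite ?conjN1 ?conj1; ring.
Qed.

Lemma sum_qq g a a' : \sum_(b : bool) (-1) ^+ b * qq g b a a' = ff g a a'.
Proof.
rewrite big_bool !qqE /ff /omega /alpha.
by case: g; case: a; case: a' => /=; rewrite ?conjCi ?conj1; ring.
Qed.

Lemma ffprod g a a' b b' : ff g a a' * ff g b b' =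
  (if (a == a') || (b == b') then 0 else (if g then (if a == b then -1 else 1) else 1))
  * (2 * hh ^+ 4) ^+ 2.
Proof.
have Hi : 'i * 'i = -1 :> algC by rewrite -expr2 sqrCi.
have E : forall x y k : algC, (x * k) * (y * k) = (x * y) * k ^+ 2.
  by move=> x y k; ring.
rewrite /ff /omega.
case: g; case: a; case: a'; case: b; case: b' => /=; rewrite ?mul0r ?mulr0 ?mul0r // E;
  rewrite ?mulrNN ?mulrN ?mulNr ?Hi ?opprK ?mul1r //; ring.
Qed.

Lemma hk : 2 * hh ^+ 4 = 2^-1 :> algC.
Proof.
have h2 : hh ^+ 2 = 2^-1 by rewrite /hh exprVn sqrtCK.
have -> : hh ^+ 4 = (hh ^+ 2) ^+ 2 by rewrite -exprM.
by rewrite h2 expr2 mulrA mulfV ?mul1r // pnatr_eq0.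
Qed.

Definition GG dA dB dE (Vi Vj : 'M[algC]_dA) (Wi Wj : 'M[algC]_dB) (a b : bool) :
  'M[algC]_(dA * dB * dE) :=
  ((if a then Vj else Vi) *t (if b then Wj else Wi)) *t (1%:M : 'M_dE).
Arguments GG {dA dB} dE.

Lemma ctrlBA dA dB dE (Vi Vj : 'M[algC]_dA) (Wi Wj : 'M[algC]_dB) :
  ctrlB dA dE Wi Wj *m ctrlA dB dE Vi Vj =
  \sum_(b : bool) \sum_(a : bool)
     (ket_proj a *t ket_proj b) *t GG dE Vi Vj Wi Wj a b.
Proof.
rewrite /ctrlB /ctrlA mulmx_suml; apply: eq_bigr => b _.
rewrite mulmx_sumr; apply: eq_bigr => a _.
by rewrite !tensmx_mul !mul1mx !mulmx1.
Qed.

Lemma circuitE dA dB dE (Vi Vj : 'M[algC]_dA) (Wi Wj : 'M[algC]_dB) g :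
  circuit dE Vi Vj Wi Wj g =
  \sum_(b : bool) \sum_(a : bool)
     (mm g a *t mm g b) *t GG dE Vi Vj Wi Wj a b.
Proof.
rewrite /circuit -(mulmxA (had2 _ _ _)) ctrlBA.
have -> : phase2 dA dB dE g = (sg g *t sg g) *t 1%:M.
  by case: g => //=; rewrite /sg !tensmx11.
rewrite /had2 mulmx_sumr mulmx_suml mulmx_suml; apply: eq_bigr => b _.
rewrite mulmx_sumr mulmx_suml mulmx_suml; apply: eq_bigr => a _.
by rewrite !tensmx_mul !mul1mx !mulmx1.
Qed.

Lemma circuitE2 dA dB dE (Vi Vj : 'M[algC]_dA) (Wi Wj : 'M[algC]_dB) g :
  circuit dE Vi Vj Wi Wj g =
  \sum_(p : bool * bool)
     (mm g p.2 *t mm g p.1) *t GG dE Vi Vj Wi Wj p.2 p.1.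
Proof. by rewrite circuitE pair_bigA. Qed.

Lemma outcomeE dA dB dE (Vi Vj : 'M[algC]_dA) (Wi Wj : 'M[algC]_dB) g
  (rho Pk : 'M[algC]_(dA * dB * dE)) b1 b2 :
  outcome_prob Vi Vj Wi Wj g rho b1 b2 Pk =
  \sum_(p : bool * bool) \sum_(p' : bool * bool)
    qq g b1 p.2 p'.2 * qq g b2 p.1 p'.1 *
    \tr (Pk *m GG dE Vi Vj Wi Wj p.2 p.1 *m rho *m adjmx (GG dE Vi Vj Wi Wj p'.2 p'.1)).
Proof.
rewrite /outcome_prob /circuit_out /= circuitE2 adjmx_sum.
rewrite mulmx_suml mulmx_suml mulmx_sumr mxtrace_sum; apply: eq_bigr => p _.
rewrite mulmx_sumr mulmx_sumr mxtrace_sum; apply: eq_bigr => p' _.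
by rewrite !adjmx_tens !tensmx_mul !mxtrace_tens /qq !mulmxA.
Qed.

Lemma outcome_lin dA dB dE K (Vi Vj : 'M[algC]_dA) (Wi Wj : 'M[algC]_dB) g
  (rho X : 'M[algC]_(dA * dB * dE)) (y : 'I_K -> algC) (P : 'I_K -> 'M[algC]_(dA * dB * dE))
  b1 b2 (c : algC) :
  X = \sum_k y k *: P k ->
  \sum_(k < K) outcome_prob Vi Vj Wi Wj g rho b1 b2 (P k) * (c * y k) =
  c * outcome_prob Vi Vj Wi Wj g rho b1 b2 X.
Proof.
move=> ->; rewrite /outcome_prob tensmx_sumr mulmx_suml mxtrace_sum mulr_sumr.
apply: eq_bigr => k _; rewrite tensmxZr -scalemxAl mxtraceZ; ring.
Qed.

Lemma sum_pairE (F : bool * bool -> algC) :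
  \sum_(p : bool * bool) F p = \sum_(b : bool) \sum_(a : bool) F (b, a).
Proof. by rewrite pair_bigA; apply: eq_bigr => [[b a]]. Qed.

Definition TT dA dB dE (Vi Vj : 'M[algC]_dA) (Wi Wj : 'M[algC]_dB)
  (X rho : 'M[algC]_(dA * dB * dE)) a b a' b' :=
  \tr (X *m GG dE Vi Vj Wi Wj a b *m rho *m adjmx (GG dE Vi Vj Wi Wj a' b')).
Arguments TT {dA dB dE}.

Lemma outcomeE' dA dB dE (Vi Vj : 'M[algC]_dA) (Wi Wj : 'M[algC]_dB) g
  (rho Pk : 'M[algC]_(dA * dB * dE)) b1 b2 :
  outcome_prob Vi Vj Wi Wj g rho b1 b2 Pk =
  \sum_(b : bool) \sum_(a : bool) \sum_(b' : bool) \sum_(a' : bool)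
    qq g b1 a a' * qq g b2 b b' * TT Vi Vj Wi Wj Pk rho a b a' b'.
Proof.
rewrite outcomeE sum_pairE; apply: eq_bigr => b _; apply: eq_bigr => a _.
by rewrite sum_pairE.
Qed.

Definition SS dA dB dE (Vi Vj : 'M[algC]_dA) (Wi Wj : 'M[algC]_dB)
  (X rho : 'M[algC]_(dA * dB * dE)) g :=
  \sum_(b : bool) \sum_(a : bool) \sum_(b' : bool) \sum_(a' : bool)
    ff g a a' * ff g b b' * TT Vi Vj Wi Wj X rho a b a' b'.
Arguments SS {dA dB dE}.

Lemma e1 : (-1 : algC) ^+ (nat_of_bool true) = -1. Proof. exact: expr1. Qed.
Lemma e0 : (-1 : algC) ^+ (nat_of_bool false) = 1. Proof. exact: expr0. Qed.


Lemma sumB (F : bool -> algC) : \sum_(b : bool) F b = F true + F false.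
Proof. by rewrite big_bool. Qed.

Lemma alg (q : bool -> bool -> bool -> algC) (T : bool -> bool -> bool -> bool -> algC)
  (phi : algC) (g : bool) :
  \sum_(b1 : bool) \sum_(b2 : bool) phi * (-1) ^+ (g + b1 + b2)%N *
    (\sum_(b : bool) \sum_(a : bool) \sum_(b' : bool) \sum_(a' : bool)
        q b1 a a' * q b2 b b' * T a b a' b') =
  phi * (-1) ^+ g *
  \sum_(b : bool) \sum_(a : bool) \sum_(b' : bool) \sum_(a' : bool)
     (\sum_(c : bool) (-1) ^+ c * q c a a') * (\sum_(c : bool) (-1) ^+ c * q c b b') *
     T a b a' b'.
Proof.
rewrite !sumB.
rewrite !exprD !e1 !e0.
ring.
Qed.
Lemma C4 dA dB dE (Vi Vj : 'M[algC]_dA) (Wi Wj : 'M[algC]_dB) (g : bool)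
  (rho X : 'M[algC]_(dA * dB * dE)) (phi : algC) :
  \sum_(b1 : bool) \sum_(b2 : bool)
    phi * (-1) ^+ (g + b1 + b2)%N * outcome_prob Vi Vj Wi Wj g rho b1 b2 X
  = phi * (-1) ^+ g * SS Vi Vj Wi Wj X rho g.
Proof.
rewrite /SS.
transitivity (\sum_(b1 : bool) \sum_(b2 : bool) phi * (-1) ^+ (g + b1 + b2)%N *
    (\sum_(b : bool) \sum_(a : bool) \sum_(b' : bool) \sum_(a' : bool)
        qq g b1 a a' * qq g b2 b b' * TT Vi Vj Wi Wj X rho a b a' b')).
  by apply: eq_bigr => b1 _; apply: eq_bigr => b2 _; rewrite outcomeE'.
rewrite (alg (qq g) (TT Vi Vj Wi Wj X rho)); congr (_ * _).
apply: eq_bigr => b _; apply: eq_bigr => a _; apply: eq_bigr => b' _; apply: eq_bigr => a' _.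
by rewrite !sum_qq.
Qed.

Definition SSa g (T : bool -> bool -> bool -> bool -> algC) :=
  \sum_(b : bool) \sum_(a : bool) \sum_(b' : bool) \sum_(a' : bool)
    ff g a a' * ff g b b' * T a b a' b'.

Lemma SS_diff T : SSa false T - SSa true T =
  2^-1 * (T false false true true + T true true false false).
Proof.
rewrite /SSa !sumB !ffprod hk /=.
by field.
Qed.

Lemma SS_const (T : bool -> bool -> bool -> bool -> algC) (t : algC) : (forall a b a' b', T a b a' b' = t) -> SSa false T = t.
Proof.
move=> HT; rewrite /SSa !sumB !ffprod hk !HT /=.
by field.
Qed.

Lemma C5 dA dB dE m (c : 'I_m -> algC) (phi : algC) (i j : 'I_m)
  (V : 'I_m -> 'M[algC]_dA) (W : 'I_m -> 'M[algC]_dB) (X rho : 'M[algC]_(dA * dB * dE)) :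
  phi != 0 ->
  \sum_(g : bool) samp_prob c phi i j g *
     (phi * (-1) ^+ g * SS (V i) (V j) (W i) (W j) X rho g) =
  c i * c j * (2^-1 * (TT (V i) (V j) (W i) (W j) X rho false false true true
                      + TT (V i) (V j) (W i) (W j) X rho true true false false)).
Proof.
move=> hphi.
rewrite sumB /samp_prob andbT andbF e1 e0.
have HSS : forall g, SS (V i) (V j) (W i) (W j) X rho g = SSa g (TT (V i) (V j) (W i) (W j) X rho) by [].
rewrite !HSS.
case: eqP => [<-|nij].
  have E : forall a b a' b', TT (V i) (V i) (W i) (W i) X rho a b a' b' =
     TT (V i) (V i) (W i) (W i) X rho false false false false.
    by move=> a b a' b'; rewrite /TT /GG !if_same.
  rewrite (@SS_const _ _ E) (E false false true true) (E true true false false).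
  by field; rewrite ?hphi.
have := SS_diff (TT (V i) (V j) (W i) (W j) X rho).
set S0 := SSa false _; set S1 := SSa true _ => HS.
have -> : S0 = S1 + (S0 - S1) by ring.
rewrite HS.
by field; rewrite ?hphi.
Qed.

Lemma phi_neq0 m (c : 'I_m -> algC) (i : 'I_m) : (forall k, 0 < c k) ->
  2 * (\sum_k c k) ^+ 2 - \sum_k c k ^+ 2 != 0.
Proof.
move=> hc; set s := \sum_k c k.
have cs : forall k, c k <= s.
  move=> k; rewrite /s (bigD1 k) //= lerDl sumr_ge0 // => l _; exact: ltW.
have s0 : 0 < s by exact: lt_le_trans (hc i) (cs i).
have le : \sum_k c k ^+ 2 <= s ^+ 2.
  rewrite [in X in _ <= X]expr2 [in X in _ <= X * _]/s mulr_suml.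
  apply: ler_sum => k _; rewrite expr2 ler_wpM2l //; exact: ltW.
have : 0 < s ^+ 2 + (s ^+ 2 - \sum_k c k ^+ 2).
  by apply: ltr_wpDr; [rewrite subr_ge0 | exact: exprn_gt0].
have -> : 2 * s ^+ 2 - \sum_k c k ^+ 2 = s ^+ 2 + (s ^+ 2 - \sum_k c k ^+ 2) by ring.
by move/lt0r_neq0.
Qed.

Lemma rhsE dA dB dE m (U : 'M[algC]_(dA * dB)) (c : 'I_m -> algC)
  (V : 'I_m -> 'M[algC]_dA) (W : 'I_m -> 'M[algC]_dB) (X rho : 'M[algC]_(dA * dB * dE)) :
  (forall i, 0 < c i) -> U = \sum_i c i *: (V i *t W i) ->
  \tr (X *m (U *t (1%:M : 'M_dE)) *m rho *m adjmx (U *t (1%:M : 'M_dE))) =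
  \sum_i \sum_j c i * c j * TT (V i) (V j) (W i) (W j) X rho false false true true.
Proof.
move=> hc ->; rewrite !tensmx_suml adjmx_sum mulmx_sumr mxtrace_sum.
under eq_bigr => j _ do rewrite mulmx_sumr mulmx_suml mulmx_suml mxtrace_sum.
rewrite exchange_big; apply: eq_bigr => i _; apply: eq_bigr => j _.
rewrite /TT /GG /= !tensmxZl adjmxZ geC0_conj ?ltW //.
rewrite -(scalemxAr (c i) X) -(scalemxAl (c i) _ rho) -(scalemxAl (c i) _ (c j *: _)).
rewrite -scalemxAr !mxtraceZ; ring.
Qed.

Theorem lemma5 (dA dB dE m K : nat)
  (U : 'M[algC]_(dA * dB)) (c : 'I_m -> algC)
  (V : 'I_m -> 'M[algC]_dA) (W : 'I_m -> 'M[algC]_dB)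
  (X : 'M[algC]_(dA * dB * dE)) (y : 'I_K -> algC)
  (P : 'I_K -> 'M[algC]_(dA * dB * dE)) (rho : 'M[algC]_(dA * dB * dE)) :
  U \is unitarymx ->
  (forall i, 0 < c i) ->
  (forall i, V i \is unitarymx) ->
  (forall i, W i \is unitarymx) ->
  U = \sum_i c i *: (V i *t W i) ->
  herm_mx X ->
  spectral_decomp X y P ->
  densitymx rho ->
  let phi := 2 * (\sum_i c i) ^+ 2 - \sum_i c i ^+ 2 in
  \sum_(i < m) \sum_(j < m) \sum_(g : bool)
     samp_prob c phi i j g *
     \sum_(b1 : bool) \sum_(b2 : bool) \sum_(k < K)
        outcome_prob (V i) (V j) (W i) (W j) g rho b1 b2 (P k) *
        (phi * (-1) ^+ (g + b1 + b2)%N * y k)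
  = \tr (X *m (U *t (1%:M : 'M_dE)) *m rho *m adjmx (U *t (1%:M : 'M_dE))).
Proof.
move=> hU hc hV hW HU hX [_ _ _ _ HX] hrho phi.
rewrite (@rhsE dA dB dE m U c V W X rho hc HU).
transitivity (\sum_i \sum_j c i * c j *
   (2^-1 * (TT (V i) (V j) (W i) (W j) X rho false false true true
          + TT (V i) (V j) (W i) (W j) X rho true true false false))).
  apply: eq_bigr => i _; apply: eq_bigr => j _.
  have hphi : phi != 0 := @phi_neq0 _ c i hc.
  rewrite -(@C5 dA dB dE m c phi i j V W X rho hphi).
  apply: eq_bigr => g _; congr (_ * _).
  transitivity (\sum_(b1 : bool) \sum_(b2 : bool)
     phi * (-1) ^+ (g + b1 + b2)%N * outcome_prob (V i) (V j) (W i) (W j) g rho b1 b2 X).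
    by apply: eq_bigr => b1 _; apply: eq_bigr => b2 _; apply: outcome_lin.
  exact: C4.
have E : \sum_i \sum_j c i * c j * TT (V i) (V j) (W i) (W j) X rho true true false false
       = \sum_i \sum_j c i * c j * TT (V i) (V j) (W i) (W j) X rho false false true true.
  by rewrite exchange_big; apply: eq_bigr => i _; apply: eq_bigr => j _; rewrite (mulrC (c j)).
transitivity (\sum_i \sum_j (2^-1 * (c i * c j * TT (V i) (V j) (W i) (W j) X rho false false true true)
     + 2^-1 * (c i * c j * TT (V i) (V j) (W i) (W j) X rho true true false false))).
  by apply: eq_bigr => i _; apply: eq_bigr => j _; ring.
under eq_bigr => i _ do rewrite big_split /= -!mulr_sumr.
rewrite big_split /= -!mulr_sumr E.
by field.
Qed.
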